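(* Let $\phi\in\mathrm{Aut}_0(H)$. Then $\phi(H(m))\not\subseteq\sum_{i=0}^{m-1}H(i)$ for all $m\geq1$.
   Context: Let $k$ be a field and $0\neq q\in k$ not a root of unity. $H=k_q[x,x^{-1},y]$ is the $k$-algebra generated by $x,x^{-1},y$ with $xx^{-1}=x^{-1}x=1$, $yx=qxy$, a Hopf algebra with $\Delta(x)=x\otimes x$, $\Delta(x^{-1})=x^{-1}\otimes x^{-1}$, $\Delta(y)=y\otimes x+1\otimes y$, $\varepsilon(x)=1$, $\varepsilon(y)=0$; $\{x^ny^m:n\in\mathbb{Z},m\in\mathbb{N}\}$ is a $k$-basis. $H_0=\mathrm{span}\{x^n:n\in\mathbb{Z}\}$ and $H(m)=H_0y^m$. $\mathrm{Aut}_0(H)$ is the group of coalgebra automorphisms $\phi$ of $H$ with $\phi(1)=1$. *)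

(* Defs.v *)
From HB Require Import structures.
From mathcomp Require Import all_boot all_order all_algebra.
From mathcomp Require Import finmap.
From mathcomp.multinomials Require Import monalg.

Set Implicit Arguments.
Unset Strict Implicit.
Unset Printing Implicit Defensive.

Import Order.TTheory GRing.Theory Num.Theory.
Local Open Scope ring_scope.

(* The quantum Laurent plane H = k_q[x, x^-1, y] as a k-vector space with
   basis x^n y^m, (n, m) in Z x N : the basis vector x^n y^m is << (n, m) >>. *)
Definition H (k : fieldType) := {malg k[(int * nat)%type]}.
(* H (x) H, with basis (x^a y^b) (x) (x^c y^d) = << ((a,b),(c,d)) >>. *)
Definition HH (k : fieldType) := {malg k[((int * nat) * (int * nat))%type]}.

Section QPlane.
Variables (k : fieldType) (q : k).

Definition mon (n : int) (m : nat) : H k := << (n, m) >>.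

(* multiplication of H, determined by y x = q x y :
   (x^a y^b)(x^c y^d) = q^(b c) x^(a+c) y^(b+d) *)
Definition mulH (u v : H k) : H k :=
  \sum_(a <- msupp u) \sum_(b <- msupp v)
     (u@_a * v@_b * q ^ (a.2%:Z * b.1)) *: << (a.1 + b.1, a.2 + b.2) >>.

Definition oneH : H k := mon 0 0.
Definition xH : H k := mon 1 0.
Definition xinvH : H k := mon (-1) 0.
Definition yH : H k := mon 0 1.

Definition tens (u v : H k) : HH k :=
  \sum_(a <- msupp u) \sum_(b <- msupp v) (u@_a * v@_b) *: << (a, b) >>.

Definition mulHH (s t : HH k) : HH k :=
  \sum_(a <- msupp s) \sum_(b <- msupp t)
     (s@_a * t@_b) *: tens (mulH << a.1 >> << b.1 >>) (mulH << a.2 >> << b.2 >>).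

Definition oneHH : HH k := tens oneH oneH.

Definition powHH (t : HH k) (m : nat) : HH k := iter m (mulHH t) oneHH.

Definition Dx : HH k := tens xH xH.
Definition Dxinv : HH k := tens xinvH xinvH.
Definition Dy : HH k := tens yH xH + tens oneH yH.

Definition DxZ (n : int) : HH k :=
  match n with Posz j => powHH Dx j | Negz j => powHH Dxinv j.+1 end.

(* Delta(x^n y^m) = Delta(x)^n Delta(y)^m, Delta being an algebra map *)
Definition DeltaB (b : int * nat) : HH k := mulHH (DxZ b.1) (powHH Dy b.2).

Definition Delta (h : H k) : HH k := \sum_(b <- msupp h) h@_b *: DeltaB b.
Definition eps (h : H k) : k := \sum_(b <- msupp h) h@_b * (b.2 == 0%N)%:R.

Definition tmap (f g : H k -> H k) (t : HH k) : HH k :=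
  \sum_(a <- msupp t) t@_a *: tens (f << a.1 >>) (g << a.2 >>).

(* phi in Aut_0(H): a coalgebra automorphism with phi(1) = 1 *)
Definition in_Aut0 (phi : {linear H k -> H k}) : Prop :=
  [/\ bijective phi,
      forall h, Delta (phi h) = tmap phi phi (Delta h),
      forall h, eps (phi h) = eps h
    & phi oneH = oneH].
End QPlane.

(* h \in H(m) = H_0 y^m = span{x^n y^m : n in Z} *)
Definition inHdeg (k : fieldType) (m : nat) (h : H k) : Prop :=
  forall b : int * nat, b.2 <> m -> h@_b = 0.

(* h \in sum_{i=0}^{m-1} H(i) = span{x^n y^i : n in Z, i < m} *)
Definition inHbelow (k : fieldType) (m : nat) (h : H k) : Prop :=
  forall b : int * nat, (m <= b.2)%N -> h@_b = 0.

(* Main.v *)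
Require Import Defs.
From HB Require Import structures.
From mathcomp Require Import all_boot all_order all_algebra.
From mathcomp Require Import finmap.
From mathcomp.multinomials Require Import monalg.
From mathcomp Require Import zify ring.
Set Implicit Arguments.
Unset Strict Implicit.
Import GRing.Theory.
Local Open Scope fset_scope.
Local Open Scope ring_scope.

Definition Msum_def (k : fieldType) (K : choiceType) (V : lmodType k) (G : K -> V)
  (g : {malg k[K]}) : V := \sum_(a <- msupp g) g@_a *: G a.
Fact Msum_key : unit. Proof. by []. Qed.
Definition Msum := locked_with Msum_key Msum_def.

Section Gen.
Variable (k : fieldType).

Section M.
Variables (K : choiceType) (V : lmodType k) (G : K -> V).

Lemma MsumE g : Msum G g = \sum_(a <- msupp g) g@_a *: G a.
Proof. by rewrite /Msum locked_withE. Qed.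

Lemma MsumW g d : msupp g `<=` d -> Msum G g = \sum_(a <- d) g@_a *: G a.
Proof.
move=> le; rewrite MsumE (big_fset_incl _ le) // => x _ /mcoeff_outdom ->.
by rewrite scale0r.
Qed.

Lemma MsumD g1 g2 : Msum G (g1 + g2) = Msum G g1 + Msum G g2.
Proof.
rewrite (@MsumW (g1 + g2) (msupp g1 `|` msupp g2)) ?msuppD_le //.
rewrite (@MsumW g1 (msupp g1 `|` msupp g2)) ?fsubsetUl //.
rewrite (@MsumW g2 (msupp g1 `|` msupp g2)) ?fsubsetUr //.
rewrite -big_split /=; apply: eq_bigr => a _.
by rewrite mcoeffD scalerDl.
Qed.

Lemma MsumZ c g : Msum G (c *: g) = c *: Msum G g.
Proof.
rewrite (@MsumW (c *: g) (msupp g)) ?msuppZ_le // MsumE scaler_sumr.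
by apply: eq_bigr => a _; rewrite mcoeffZ scalerA.
Qed.

Lemma MsumU a : Msum G << a >> = G a.
Proof.
by rewrite MsumE msuppU oner_eq0 big_seq_fset1 mcoeffUU scale1r.
Qed.

Lemma Msum_lin (V' : lmodType k) (L : V -> V') :
  (forall x y, L (x + y) = L x + L y) -> (forall c x, L (c *: x) = c *: L x) ->
  forall g, L (Msum G g) = Msum (fun a => L (G a)) g.
Proof.
move=> LD LZ g.
have L0 : L 0 = 0 by rewrite -(scale0r (0 : V)) LZ scale0r.
have aux : forall s : seq K, L (\sum_(a <- s) g@_a *: G a) = \sum_(a <- s) g@_a *: L (G a).
  elim=> [|x s IH]; first by rewrite !big_nil.
  by rewrite !big_cons LD LZ IH.
by rewrite /Msum !locked_withE /Msum_def aux.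
Qed.
End M.

Lemma Msum_coef (K K' : choiceType) (G : K -> {malg k[K']}) g z :
  (Msum G g)@_z = \sum_(a <- msupp g) g@_a * (G a)@_z.
Proof.
rewrite MsumE raddf_sum; apply: eq_bigr => a _ /=; by rewrite mcoeffZ.
Qed.

Lemma scaleU (K : choiceType) (c : k) (a : K) : c *: << a >> = << c *g a >>.
Proof.
apply/malgP => z; rewrite mcoeffZ !mcoeffU; case: eqP => _; by rewrite ?mulr1 ?mulr0.
Qed.

Lemma malg_Msum (K : choiceType) (g : {malg k[K]}) : Msum (fun a => << a >>) g = g.
Proof.
rewrite MsumE [RHS]monalgE; apply: eq_bigr => a _; by rewrite scaleU.
Qed.

Lemma sum_supp1 (K : choiceType) (V : zmodType) (g : {malg k[K]}) p (F : K -> V) :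
  (forall a, a != p -> a \in msupp g -> F a = 0) ->
  (p \notin msupp g -> F p = 0) ->
  \sum_(a <- msupp g) F a = F p.
Proof.
move=> h1 h2.
have le : msupp g `<=` (p |` msupp g) by apply: fsubsetU1.
rewrite (big_fset_incl _ le); last first.
  move=> x; rewrite !inE => /orP [/eqP -> /h2 //|-> //].
rewrite (big_fsetD1 p) ?fsetU11 //= big1_fset ?addr0 // => a.
rewrite !inE => /andP [ap /orP [/eqP E|ag]] _; first by rewrite E eqxx in ap.
by apply: h1.
Qed.

Lemma sum_neq0 (T : Type) (V : zmodType) (s : seq T) (F : T -> V) :
  \sum_(i <- s) F i != 0 -> exists2 i, List.In i s & F i != 0.
Proof.
elim: s => [|x s IH]; first by rewrite big_nil eqxx.
rewrite big_cons; case: (eqVneq (F x) 0) => [->|nx _]; last by exists x; [left|].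
rewrite add0r => /IH [i si Fi]; exists i => //; by right.
Qed.
Lemma mcoeffU_neq0 (K : choiceType) (a z : K) :
  (<< a >> : {malg k[K]})@_z != 0 -> z = a.
Proof. by rewrite mcoeffU; case: (a =P z) => [-> _ //|_]; rewrite mulr0n eqxx. Qed.

Lemma add_neq0 (V : zmodType) (x y : V) : x + y != 0 -> x != 0 \/ y != 0.
Proof. by case: (eqVneq x 0) => [->|]; [rewrite add0r; right|left]. Qed.
Lemma msupp1 (K : choiceType) (a : K) : msupp (<< a >> : {malg k[K]}) = [fset a].
Proof. by rewrite msuppU oner_eq0. Qed.

Lemma sumU1 (K : choiceType) (V : zmodType) (a : K) (F : K -> V) :
  \sum_(x <- msupp (<< a >> : {malg k[K]})) F x = F a.
Proof. by rewrite msupp1 big_seq_fset1. Qed.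
End Gen.

Notation K1 := (int * nat)%type.
Notation K2 := (K1 * K1)%type.

Fact stens_key : unit. Proof. by []. Qed.
Definition stens (k : fieldType) := locked_with stens_key (@tens k).

Section Q.
Variables (k : fieldType) (q : k).

Lemma tensE (u v : H k) (p r : K1) : (tens u v)@_(p, r) = u@_p * v@_r.
Proof.
rewrite /tens raddf_sum /=.
rewrite (@sum_supp1 _ _ _ u p); first last.
- move/mcoeff_outdom => up; rewrite raddf_sum big1 //= => b _.
  by rewrite mcoeffZ up !mul0r.
- move=> a ap _; rewrite raddf_sum big1 //= => b _; rewrite mcoeffZ mcoeffU.
  by rewrite xpair_eqE (negbTE ap) mulr0.
rewrite raddf_sum /= (@sum_supp1 _ _ _ v r); first last.
- by move/mcoeff_outdom => ->; rewrite mcoeffZ mcoeffU eqxx mulr0 mul0r.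
- by move=> b br _; rewrite mcoeffZ mcoeffU xpair_eqE eqxx (negbTE br) mulr0.
by rewrite mcoeffZ mcoeffU eqxx mulr1.
Qed.

Lemma tens_stens (u v : H k) : tens u v = stens u v.
Proof. by rewrite /stens locked_withE. Qed.

Lemma stensEz (u v : H k) (z : K2) : (stens u v)@_z = u@_z.1 * v@_z.2.
Proof. by case: z => p r; rewrite -tens_stens tensE. Qed.

Lemma stensU (a b : K1) : stens << a >> << b >> = << (a, b) >> :> HH k.
Proof.
apply/malgP => [[p r]]; rewrite stensEz !mcoeffU xpair_eqE /=.
by rewrite -natrM mulnb.
Qed.

Lemma stensZl c (u v : H k) : stens (c *: u) v = c *: stens u v.
Proof. by apply/malgP => z; rewrite mcoeffZ !stensEz mcoeffZ mulrA. Qed.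
Lemma stensZr c (u v : H k) : stens u (c *: v) = c *: stens u v.
Proof. by apply/malgP => z; rewrite mcoeffZ !stensEz mcoeffZ mulrCA. Qed.
Lemma stensDl (u u' v : H k) : stens (u + u') v = stens u v + stens u' v.
Proof. by apply/malgP => z; rewrite mcoeffD !stensEz mcoeffD mulrDl. Qed.
Lemma stensDr (u v v' : H k) : stens u (v + v') = stens u v + stens u v'.
Proof. by apply/malgP => z; rewrite mcoeffD !stensEz mcoeffD mulrDr. Qed.
End Q.

Fact smul_key : unit. Proof. by []. Qed.
Definition smul (k : fieldType) (q : k) := locked_with smul_key (mulHH q).

Definition addK (a b : K1) : K1 := (a.1 + b.1, (a.2 + b.2)%N).
Definition addK2 (a b : K2) : K2 := (addK a.1 b.1, addK a.2 b.2).

Lemma addK2_inj a : injective (addK2 a).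
Proof.
move=> [[b1 b2] [b3 b4]] [[c1 c2] [c3 c4]]; rewrite /addK2 /addK /=.
case=> h1 h2 h3 h4; congr ((_,_),(_,_)); lia.
Qed.

Section Q2.
Variables (k : fieldType) (q : k).

Definition wt (a b : K2) : k := q ^ (a.1.2%:Z * b.1.1) * q ^ (a.2.2%:Z * b.2.1).

Lemma mulH_UU (a b : K1) :
  mulH q << a >> << b >> = q ^ (a.2%:Z * b.1) *: << addK a b >> :> H k.
Proof.
by rewrite /mulH sumU1 sumU1
  !mcoeffUU !mul1r.
Qed.

Lemma smul_UU (a b : K2) :
  smul q << a >> << b >> = wt a b *: << addK2 a b >>.
Proof.
rewrite /smul locked_withE /mulHH sumU1 sumU1.
rewrite !mcoeffUU !mul1r scale1r !mulH_UU tens_stens stensZl stensZr stensU scalerA.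
by rewrite /wt mulrC.
Qed.

Lemma smul_U (a : K2) (t : HH k) :
  smul q << a >> t = Msum (fun b => wt a b *: << addK2 a b >>) t.
Proof.
rewrite MsumE /smul locked_withE /mulHH sumU1.
apply: eq_bigr => b _.
rewrite mcoeffUU mul1r !mulH_UU tens_stens stensZl stensZr stensU !scalerA.
by rewrite /wt [q ^ _ * _]mulrC mulrA.
Qed.

Lemma smul_Msum (s t : HH k) :
  smul q s t = Msum (fun a => smul q << a >> t) s.
Proof.
rewrite MsumE /smul !locked_withE /mulHH; apply: eq_bigr => a _.
rewrite sumU1 scaler_sumr; apply: eq_bigr => b _.
by rewrite mcoeffUU mul1r scalerA.
Qed.

Lemma smul_Ucoef (a : K2) (t : HH k) z :
  (smul q << a >> t)@_z =
  \sum_(b <- msupp t) t@_b * (wt a b * (addK2 a b == z)%:R).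
Proof.
rewrite smul_U Msum_coef; apply: eq_bigr => b _.
by rewrite mcoeffZ mcoeffU.
Qed.

Lemma smul_Usupp (a : K2) (t : HH k) z :
  (smul q << a >> t)@_z != 0 -> exists b, t@_b != 0 /\ z = addK2 a b.
Proof.
rewrite smul_Ucoef => /sum_neq0 [b _].
case: (eqVneq (addK2 a b) z) => [<-|_]; last by rewrite mulr0 mulr0 eqxx.
rewrite mulr1 mulf_eq0 negb_or => /andP [tb _]; by exists b.
Qed.

Lemma smul_Uval (a b : K2) (t : HH k) :
  (smul q << a >> t)@_(addK2 a b) = t@_b * wt a b.
Proof.
rewrite smul_Ucoef (@sum_supp1 _ _ _ t b); first by rewrite eqxx mulr1.
- move=> c cb _; rewrite (_ : (addK2 a c == addK2 a b) = false) ?mulr0 //.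
  by apply/negbTE; apply: contra cb => /eqP /addK2_inj ->.
- by move/mcoeff_outdom ->; rewrite mul0r.
Qed.
End Q2.

Fact smulU_key : unit. Proof. by []. Qed.
Definition smulU (k : fieldType) (q : k) :=
  locked_with smulU_key (fun (a : K2) (t : HH k) => smul q << a >> t).

Section Q2b.
Variables (k : fieldType) (q : k).

Lemma smulUE a t : smulU q a t = smul q << a >> t.
Proof. by rewrite /smulU locked_withE. Qed.

Lemma smulU_supp (a : K2) (t : HH k) z :
  (smulU q a t)@_z != 0 -> exists b, t@_b != 0 /\ z = addK2 a b.
Proof. rewrite smulUE; exact: smul_Usupp. Qed.

Lemma smulU_val (a b : K2) (t : HH k) :
  (smulU q a t)@_(addK2 a b) = t@_b * wt q a b.
Proof. rewrite smulUE; exact: smul_Uval. Qed.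

Lemma smulU_0 (a : K2) (t : HH k) z :
  (forall b, t@_b != 0 -> z != addK2 a b) -> (smulU q a t)@_z = 0.
Proof.
move=> h; case: (eqVneq ((smulU q a t)@_z) 0) => // /smulU_supp [b [tb E]].
by move: (h b tb); rewrite E eqxx.
Qed.
End Q2b.

Definition Y1 : K2 := ((0, 1%N), (1, 0%N)).
Definition Y2 : K2 := ((0, 0%N), (0, 1%N)).
Definition A0 (a : int) : K2 := ((a, 0%N), (a, 0%N)).

Fact P_key : unit. Proof. by []. Qed.
Definition P (k : fieldType) (q : k) := locked_with P_key (powHH q (Dy k)).

Section Q3.
Variables (k : fieldType) (q : k).

Lemma oneHH_U : oneHH k = << A0 0 >>.
Proof. by rewrite /oneHH tens_stens stensU. Qed.
Lemma Dx_U : Dx k = << A0 1 >>.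
Proof. by rewrite /Dx tens_stens stensU. Qed.
Lemma Dxinv_U : Dxinv k = << A0 (-1) >>.
Proof. by rewrite /Dxinv tens_stens stensU. Qed.
Lemma Dy_U : Dy k = << Y1 >> + << Y2 >>.
Proof. by rewrite /Dy !tens_stens !stensU. Qed.

Lemma powS (t : HH k) n : powHH q t n.+1 = smul q t (powHH q t n).
Proof. by rewrite /smul locked_withE. Qed.

Lemma pow0 (t : HH k) : powHH q t 0 = << A0 0 >>.
Proof. exact: oneHH_U. Qed.

Lemma wtA0 a b : wt q (A0 a) b = 1.
Proof. by rewrite /wt /= !mul0r expr0z mulr1. Qed.

Lemma powDx n : powHH q (Dx k) n = << A0 n%:Z >>.
Proof.
elim: n => [|n IH]; first exact: pow0.
rewrite powS IH Dx_U smul_UU wtA0 scale1r; congr << _ >>;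
  rewrite /addK2 /addK /A0 /=; congr ((_,_),(_,_)); lia.
Qed.

Lemma powDxinv n : powHH q (Dxinv k) n = << A0 (- n%:Z) >>.
Proof.
elim: n => [|n IH]; first exact: pow0.
rewrite powS IH Dxinv_U smul_UU wtA0 scale1r; congr << _ >>;
  rewrite /addK2 /addK /A0 /=; congr ((_,_),(_,_)); lia.
Qed.

Lemma DxZ_U n : DxZ q n = << A0 n >>.
Proof.
case: n => j; first exact: powDx.
by rewrite /DxZ powDxinv NegzE.
Qed.


Lemma DeltaB_U (b : K1) : DeltaB q b = smulU q (A0 b.1) (P q b.2).
Proof. by rewrite smulUE /DeltaB DxZ_U /smul /P !locked_withE. Qed.

Lemma P0 : P q 0 = << A0 0 >>.
Proof. by rewrite /P locked_withE /= oneHH_U. Qed.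

Lemma PS n : P q n.+1 = smulU q Y1 (P q n) + smulU q Y2 (P q n).
Proof.
rewrite /P locked_withE powS Dy_U smul_Msum MsumD; congr (_ + _); rewrite smulUE; exact: MsumU.
Qed.

Definition Pinv n (t : HH k) := forall z, t@_z != 0 ->
  [/\ z.1.1 = 0, z.2.1 = z.1.2%:Z & (z.1.2 + z.2.2)%N = n].

Lemma P_inv n : Pinv n (P q n).
Proof.
elim: n => [|n IH] z.
  by rewrite P0 => /mcoeffU_neq0 ->.
rewrite PS mcoeffD => /add_neq0 [h|h].
- have [[[b1 b2] [b3 b4]] [/IH [/= h1 h2 h3] ->]] := smulU_supp h.
  rewrite /addK2 /addK /Y1 /=; split; lia.
- have [[[b1 b2] [b3 b4]] [/IH [/= h1 h2 h3] ->]] := smulU_supp h.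
  rewrite /addK2 /addK /Y2 /=; split; lia.
Qed.
End Q3.

Section Q4.
Variables (k : fieldType) (q : k).

Lemma DB_supp (b0 : K1) z : (DeltaB q b0)@_z != 0 ->
  [/\ z.1.1 = b0.1, z.2.1 = b0.1 + z.1.2%:Z & (z.1.2 + z.2.2)%N = b0.2].
Proof.
case: b0 => a m; rewrite DeltaB_U => /smulU_supp [[[b1 b2][b3 b4]] [/P_inv [/= h1 h2 h3] ->]].
rewrite /addK2 /addK /A0 /=; split; lia.
Qed.

Lemma DB0 a : DeltaB q (a, 0%N) = << A0 a >>.
Proof.
rewrite DeltaB_U /= P0 smulUE smul_UU wtA0 scale1r; congr << _ >>;
  rewrite /addK2 /addK /A0 /=; congr ((_,_),(_,_)); lia.
Qed.

Lemma P_top N : (P q N)@_((0, N), (N%:Z, 0%N)) = 1.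
Proof.
elim: N => [|N IH].
  by rewrite P0 mcoeffU /A0 eqxx.
rewrite PS mcoeffD.
have -> : ((0, N.+1), (N.+1%:Z, 0%N)) = addK2 Y1 ((0, N), (N%:Z, 0%N)) :> K2.
  rewrite /addK2 /addK /Y1 /=; congr ((_,_),(_,_)); lia.
rewrite smulU_val IH smulU_0 ?addr0.
  by rewrite /wt /Y1 /= ?(mulr0, mul0r, mul1r, expr0z, mulr1).
move=> [[b1 b2] [b3 b4]] _; rewrite /addK2 /addK /Y1 /Y2 /=.
apply/eqP => [[]] *; lia.
Qed.

Definition sP N := (P q N.+1)@_((0, N), (N%:Z, 1%N)).

Lemma sP0 : sP 0 = 1.
Proof.
rewrite /sP PS mcoeffD.
have -> : ((0, 0%N), (0%:Z, 1%N)) = addK2 Y2 (A0 0) :> K2.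
  by rewrite /addK2 /addK /Y2 /A0 /=; congr ((_,_),(_,_)).
rewrite smulU_val (@smulU_0 _ _ Y1) ?add0r.
  by rewrite P0 mcoeffU eqxx /wt /Y2 /A0 /= ?(mulr0, mul0r, mul1r, expr0z, mulr1).
move=> [[b1 b2] [b3 b4]] _; rewrite /addK2 /addK /Y1 /Y2 /A0 /=.
apply/eqP => [[]] *; lia.
Qed.

Lemma sPS N : sP N.+1 = sP N + q ^+ N.+1.
Proof.
rewrite {1}/sP PS mcoeffD.
have -> : ((0, N.+1), (N.+1%:Z, 1%N)) = addK2 Y1 ((0, N), (N%:Z, 1%N)) :> K2.
  rewrite /addK2 /addK /Y1 /=; congr ((_,_),(_,_)); lia.
rewrite smulU_val -/(sP N).
have -> : addK2 Y1 ((0, N), (N%:Z, 1%N)) = addK2 Y2 ((0, N.+1), (N.+1%:Z, 0%N)) :> K2.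
  rewrite /addK2 /addK /Y1 /Y2 /=; congr ((_,_),(_,_)); lia.
rewrite smulU_val P_top mul1r /wt /Y1 /Y2 /= ?(mulr0, mul0r, mul1r, expr0z, mulr1).
by rewrite -exprnP.
Qed.

Lemma sP_geom N : (1 - q) * sP N = 1 - q ^+ N.+1.
Proof.
elim: N => [|N IH]; first by rewrite sP0 mulr1 expr1.
rewrite sPS mulrDr IH !exprS; ring.
Qed.
End Q4.

Definition le_deg (k : fieldType) n (h : H k) := forall b : K1, (n < b.2)%N -> h@_b = 0.
Definition Wn (k : fieldType) n (t : HH k) :=
  forall z : K2, (n <= z.1.2)%N -> (0 < z.2.2)%N -> t@_z = 0.

Section Q5.
Variables (k : fieldType) (q : k).
Hypothesis hq : forall n, q ^+ n.+1 != 1.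

Lemma sP_neq0 N : sP q N != 0.
Proof.
apply/eqP => e; move: (sP_geom q N); rewrite e mulr0 => /eqP.
by rewrite eq_sym subr_eq0 eq_sym (negbTE (hq N)).
Qed.

Lemma DeltaM h : Delta q h = Msum (DeltaB q) h.
Proof. by rewrite MsumE. Qed.

Lemma Delta_coef h z :
  (Delta q h)@_z = \sum_(b <- msupp h) h@_b * (DeltaB q b)@_z.
Proof. by rewrite DeltaM Msum_coef. Qed.

Lemma deltaA n h : le_deg n h -> Wn n (Delta q h).
Proof.
move=> hd z h1 h2; rewrite Delta_coef big1_seq // => b _.
have [->|/DB_supp [_ _ e]] := eqVneq ((DeltaB q b)@_z) 0; first by rewrite mulr0.
rewrite hd ?mul0r //; move: h1 h2 e; case: z => [[z1 z2] [z3 z4]]; case: b => b1 b2 /=; lia.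
Qed.

Lemma deltaB n g : Wn n (Delta q g) -> le_deg n g.
Proof.
move=> hW [a m] /= hm.
have [N eN] : exists N, m = N.+1 by exists m.-1; lia.
subst m.
have key : (Delta q g)@_(addK2 (A0 a) ((0, N), (N%:Z, 1%N))) = g@_(a, N.+1) * sP q N.
  rewrite Delta_coef (@sum_supp1 _ _ _ g (a, N.+1)).
  - by rewrite DeltaB_U smulU_val wtA0 mulr1.
  - move=> b bn _.
    have [->|/DB_supp [e1 _ e3]] := eqVneq ((DeltaB q b)@_(addK2 (A0 a) ((0, N), (N%:Z, 1%N)))) 0; first by rewrite mulr0.
    move: bn e1 e3; case: b => b1 b2 /=; rewrite /addK2 /addK /A0 /= => bn e1 e3.
    exfalso; move/negP: bn; apply; apply/eqP; congr (_,_); lia.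
  - by move/mcoeff_outdom ->; rewrite mul0r.
move: key; rewrite hW /=; last 2 first.
- lia.
- lia.
by move/esym/eqP; rewrite mulf_eq0 (negbTE (sP_neq0 N)) orbF => /eqP.
Qed.
End Q5.

Section Q6.
Variables (k : fieldType) (q : k).
Hypothesis hq : forall n, q ^+ n.+1 != 1.

Lemma tmapM (f g : H k -> H k) t :
  tmap f g t = Msum (fun a : K2 => stens (f << a.1 >>) (g << a.2 >>)) t.
Proof. by rewrite MsumE; apply: eq_bigr => a _; rewrite tens_stens. Qed.

Lemma le_deg_U n (c : K1) : (c.2 <= n)%N -> le_deg n (<< c >> : H k).
Proof.
move=> hc b hb; rewrite mcoeffU; case: (c =P b) => [E|_]; last by rewrite mulr0n.
by move: hc hb; rewrite E; lia.
Qed.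

Variables (f : H k -> H k).
Hypothesis fD : forall u v, f (u + v) = f u + f v.
Hypothesis fZ : forall c u, f (c *: u) = c *: f u.
Hypothesis fDelta : forall h, Delta q (f h) = tmap f f (Delta q h).

Lemma f_Msum h : f h = Msum (fun b => f << b >>) h.
Proof. by rewrite -[in LHS](malg_Msum h) (Msum_lin _ fD fZ). Qed.

Lemma base0 a : le_deg 0 (f << (a, 0%N) >>).
Proof.
set g := f << (a, 0%N) >>.
have D : Delta q g = stens g g.
  by rewrite /g fDelta DeltaM MsumU DB0 tmapM MsumU.
move=> [e N] /= hN.
have := congr1 (mcoeff ((e, N), (e, N))) D.
rewrite stensEz /= Delta_coef big1_seq.
  by move/esym/eqP; rewrite mulf_eq0 orbb => /eqP.
move=> b _.
have [->|/DB_supp [e1 e2 _]] := eqVneq ((DeltaB q b)@_((e, N), (e, N))) 0; first by rewrite mulr0.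
exfalso; move: e1 e2 => /= -> ; lia.
Qed.

Lemma base h : le_deg 0 h -> le_deg 0 (f h).
Proof.
move=> hd z hz; rewrite f_Msum Msum_coef big1_seq // => [[a m]] /andP [_].
rewrite -mcoeff_neq0 => hb.
have m0 : m = 0%N.
  by apply/eqP; apply: contraNT hb; rewrite -lt0n => /(hd (a, m)) ->.
by rewrite m0 base0 ?mulr0.
Qed.

Lemma tmapW n t : (forall h, le_deg n.-1 h -> le_deg n.-1 (f h)) -> (0 < n)%N ->
  Wn n t -> Wn n (tmap f f t).
Proof.
move=> IH n0 hW z h1 h2; rewrite tmapM Msum_coef big1_seq // => a /andP [_].
rewrite -mcoeff_neq0 => ha; rewrite stensEz.
case: (leqP n a.1.2) => ha1.
  have a2 : a.2.2 = 0%N.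
    by apply/eqP; apply: contraNT ha; rewrite -lt0n => /(hW a ha1) ->.
  have hb : le_deg 0 (<< a.2 >> : H k) by apply: le_deg_U; rewrite a2.
  by rewrite (base hb) ?mulr0 //.
have hb : le_deg n.-1 (<< a.1 >> : H k) by apply: le_deg_U; rewrite -ltnS prednK.
rewrite (IH _ hb) ?mul0r ?mulr0 //.
by apply: (leq_trans _ h1); rewrite ltn_predL.
Qed.

Theorem preserve n h : le_deg n h -> le_deg n (f h).
Proof.
elim: n h => [|n IHn] h hd; first exact: base.
apply: (deltaB hq); rewrite fDelta; apply: tmapW => //.
exact: deltaA.
Qed.
End Q6.

Lemma eq_Msum (k : fieldType) (K : choiceType) (V : lmodType k) (G G' : K -> V) g :
  G =1 G' -> Msum G g = Msum G' g.
Proof. by move=> e; rewrite !MsumE; apply: eq_bigr => a _; rewrite e. Qed.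

Lemma lin_Msum (k : fieldType) (K : choiceType) (V : lmodType k)
  (f : {malg k[K]} -> V) :
  (forall u v, f (u + v) = f u + f v) -> (forall c u, f (c *: u) = c *: f u) ->
  forall h, f h = Msum (fun b => f << b >>) h.
Proof. by move=> fD fZ h; rewrite -[in LHS](malg_Msum h) (Msum_lin _ fD fZ). Qed.

Section Q7.
Variables (k : fieldType).

Lemma tmapD (f g : H k -> H k) t t' : tmap f g (t + t') = tmap f g t + tmap f g t'.
Proof. by rewrite !tmapM MsumD. Qed.
Lemma tmapZ (f g : H k -> H k) c t : tmap f g (c *: t) = c *: tmap f g t.
Proof. by rewrite !tmapM MsumZ. Qed.

Lemma stens_Msum (u v : H k) :
  stens u v = Msum (fun a => Msum (fun b => << (a, b) >>) v) u.
Proof.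
rewrite (@lin_Msum _ _ _ (fun x => stens x v)); last 2 first.
- by move=> x y; rewrite stensDl.
- by move=> c x; rewrite stensZl.
apply: eq_Msum; move=> a /=.
rewrite (@lin_Msum _ _ _ (fun y => stens << a >> y)); last 2 first.
- by move=> x y; rewrite stensDr.
- by move=> c x; rewrite stensZr.
apply: eq_Msum; move=> b /=; exact: stensU.
Qed.

Lemma stens_Msuml (G : K1 -> H k) u w :
  stens (Msum G u) w = Msum (fun a => stens (G a) w) u.
Proof.
apply: (@Msum_lin _ _ _ G _ (fun x => stens x w)).
- by move=> x y; rewrite stensDl.
- by move=> c x; rewrite stensZl.
Qed.

Lemma stens_Msumr (G : K1 -> H k) v w :
  stens w (Msum G v) = Msum (fun b => stens w (G b)) v.
Proof.
apply: (@Msum_lin _ _ _ G _ (fun x => stens w x)).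
- by move=> x y; rewrite stensDr.
- by move=> c x; rewrite stensZr.
Qed.

Lemma tmap_stens (f g : H k -> H k) :
  (forall u v, f (u + v) = f u + f v) -> (forall c u, f (c *: u) = c *: f u) ->
  (forall u v, g (u + v) = g u + g v) -> (forall c u, g (c *: u) = c *: g u) ->
  forall u v, tmap f g (stens u v) = stens (f u) (g v).
Proof.
move=> fD fZ gD gZ u v.
rewrite stens_Msum (Msum_lin _ (tmapD f g) (tmapZ f g)).
rewrite [f u](lin_Msum fD fZ) stens_Msuml.
apply: eq_Msum; move=> a /=.
rewrite (Msum_lin _ (tmapD f g) (tmapZ f g)).
rewrite [g v](lin_Msum gD gZ) stens_Msumr.
apply: eq_Msum; move=> b /=.
by rewrite tmapM MsumU.
Qed.
End Q7.

Theorem lemma2p8 (k : fieldType) (q : k) (hq0 : q != 0)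
  (hqroot : forall n : nat, (0 < n)%N -> q ^+ n != 1)
  (phi : {linear H k -> H k}) (hphi : in_Aut0 q phi) :
  forall m : nat, (1 <= m)%N ->
    ~ (forall h : H k, inHdeg m h -> inHbelow m (phi h)).
Proof.
move=> m m1 Hm.
have hq : forall n, q ^+ n.+1 != 1 by move=> n; apply: hqroot.
case: hphi => [[psi c1 c2] hD _ _].
have phiD : forall u v, phi (u + v) = phi u + phi v by move=> u v; rewrite raddfD.
have phiZ : forall c u, phi (c *: u) = c *: phi u by move=> c u; rewrite linearZ.
have psiD : forall u v, psi (u + v) = psi u + psi v.
  by move=> u v; apply: (can_inj c1); rewrite phiD !c2.
have psiZ : forall c u, psi (c *: u) = c *: psi u.
  by move=> c u; apply: (can_inj c1); rewrite phiZ !c2.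
have inv : forall t, tmap psi psi (tmap phi phi t) = t.
  move=> t; rewrite [tmap phi phi t]tmapM (Msum_lin _ (tmapD psi psi) (tmapZ psi psi)).
  rewrite -[RHS]malg_Msum; apply: eq_Msum => a /=.
  by rewrite tmap_stens // !c1 stensU; case: a.
have psiDelta : forall h, Delta q (psi h) = tmap psi psi (Delta q h).
  by move=> h; rewrite -{2}(c2 h) hD inv.
have P := preserve hq psiD psiZ psiDelta.
pose h : H k := << (0, m) >>.
have hdeg : inHdeg m h.
  move=> b bm; rewrite /h mcoeffU; case: ((0, m) =P b) => [E|_]; last by rewrite mulr0n.
  by rewrite -E in bm.
have hb := Hm h hdeg.
have hle : le_deg m.-1 (phi h).
  move=> b hb'; apply: hb; by rewrite -(prednK m1).
have H0 : (psi (phi h))@_((0 : int), m) = 0.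
  by apply: (P _ _ hle); rewrite /= ltn_predL.
by move: H0; rewrite c1 /h mcoeffUU => /eqP; rewrite oner_eq0.
Qed.
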